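(* Let $g\in\mathbb{Z}^+$, let $\mathcal{H}$ be a hierarchical generator with lineage $\mathcal{L}$ and $\mathrm{gap}(\mathcal{H})\le g$, and let $\varphi\in\mathcal{H}$. Then the family $\mathfrak{R}_g(\mathcal{H},\varphi)$ of all hierarchical generators $\mathcal{H}_*$ whose lineage $\mathcal{L}_*$ satisfies $\mathcal{L}\cup\{\varphi\}\subset\mathcal{L}_*$ and $\mathrm{gap}(\mathcal{H}_* )\le g$ has a least element $\bar{\mathcal{H}}$, i.e. its lineage $\bar{\mathcal{L}}$ is contained in the lineage of every member of the family. Moreover, for every $\psi\in(\bar{\mathcal{L}}\setminus\mathcal{L})\setminus\{\varphi\}$ there is an integer $k$ with $1\le k\le\lfloor\ell_\varphi/g\rfloor$ and $\psi\in\mathcal{O}^k(\varphi,-g,\mathfrak{B})$.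
   Context: Fix integers $d\ge1$, $n\ge2$, $m\ge2$; $s=n-1$, $p=m-1$. B-splines $\varphi^\ell_{\vec i}(\vec x)=\prod_kQ(n^\ell x_k-i_k)$ for $\ell\ge0$, $\vec i\in\mathbb{Z}^d$, $Q$ the uniform B-spline of order $m$ with knots $0,\dots,m$; $\mathfrak{B}$ the set of all of them, $\ell_\varphi$ the level; $\mathcal{B}^0=\{\varphi^0_{\vec i}:\vec i\in[-p:0]^d\}$. Children $\mathrm{ch}(\varphi^\ell_{\vec i})=\{\varphi^{\ell+1}_{\vec k}:n\vec i\le\vec k\le n\vec i+sm\}$, extended to sets by union. Cells $I^\ell_{\vec i}=\prod_k[i_kn^{-\ell},(i_k+1)n^{-\ell})$, cell children $\mathrm{ch}(I^\ell_{\vec i})=\{I^{\ell+1}_{\vec k}:n\vec i\le\vec k\le n\vec i+s\}$, $\mathrm{ch}^k$ iterated, $\mathrm{ch}^{-k}(I)=\{J:I\in\mathrm{ch}^k(J)\}$. $\mathbb{I}(\varphi^\ell_{\vec i})=\{I^\ell_{\vec k}:\vec i\le\vec k\le\vec i+p\}$, $\mathbb{I}^k(\varphi)=\mathrm{ch}^k(\mathbb{I}(\varphi))$ ($k\in\mathbb{Z}$), $\mathbb{B}^k(I)=\{\varphi\in\mathfrak{B}:I\in\mathbb{I}^{-k}(\varphi)\}$, extended to sets by union. $\mathcal{O}(\mathcal{F},j,\mathcal{H})=\mathbb{B}^j(\mathbb{I}(\mathcal{F}))\cap\mathcal{H}$, $\mathcal{O}(\varphi,j,\mathcal{H})=\mathcal{O}(\{\varphi\},j,\mathcal{H})$,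 $\mathcal{O}^{k+1}(\mathcal{F},j,\mathcal{H})=\mathcal{O}(\mathcal{O}^k(\mathcal{F},j,\mathcal{H}),j,\mathcal{H})$, $\mathcal{O}^1=\mathcal{O}$. A lineage is a finite $\mathcal{L}\subset\mathfrak{B}$ with $\mathcal{L}\subset\mathcal{B}^0\cup\mathrm{ch}(\mathcal{L})$; its hierarchical generator is $(\mathcal{B}^0\cup\mathrm{ch}(\mathcal{L}))\setminus\mathcal{L}$ (the lineage is determined by the generator). $\mathrm{gap}_{\mathcal{H}}(\varphi)=\sup\{g\in\mathbb{Z}:\mathcal{O}(\varphi,-g,\mathcal{H})\neq\emptyset\}$ for $\varphi\in\mathcal{H}$, and $\mathrm{gap}(\mathcal{H})=\max_{\varphi\in\mathcal{H}}\mathrm{gap}_{\mathcal{H}}(\varphi)$. *)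

(* Defs.v *)
From Stdlib Require Import ZArith List.
Import ListNotations.
Open Scope Z_scope.

(* A B-spline phi^l_i is represented by (l, i) with i : list Z of length d;
   a cell I^l_i likewise.  The map (l,i) |-> phi^l_i is injective. *)
Definition bs := (nat * list Z)%type.
Definition cell := (nat * list Z)%type.
Definition bset := bs -> Prop.
Definition cset := cell -> Prop.

Section Defs.
Variables (d n m : nat).
Let nZ := Z.of_nat n.
Let mZ := Z.of_nat m.
Let s := nZ - 1.
Let p := mZ - 1.

Definition lvl (phi : bs) : nat := fst phi.

Definition allB : bset := fun phi => length (snd phi) = d.

Definition B0 : bset := fun phi =>
  fst phi = 0%nat /\ length (snd phi) = d /\ Forall (fun i => -p <= i <= 0) (snd phi).

Definition bs_child (phi psi : bs) : Prop :=
  fst psi = S (fst phi) /\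
  Forall2 (fun i k => nZ * i <= k <= nZ * i + s * mZ) (snd phi) (snd psi).

Definition ch (L : bset) : bset := fun psi => exists phi, L phi /\ bs_child phi psi.

Definition cell_child (I J : cell) : Prop :=
  fst J = S (fst I) /\
  Forall2 (fun i k => nZ * i <= k <= nZ * i + s) (snd I) (snd J).

Definition chc (S0 : cset) : cset := fun J => exists I, S0 I /\ cell_child I J.

Fixpoint chc_n (k : nat) (S0 : cset) : cset :=
  match k with O => S0 | S k' => chc (chc_n k' S0) end.

Definition chc_z (k : Z) (S0 : cset) : cset :=
  if (0 <=? k) then chc_n (Z.to_nat k) S0
  else fun J => exists I, S0 I /\ chc_n (Z.to_nat (- k)) (eq J) I.

Definition II (phi : bs) : cset := fun I =>
  fst I = fst phi /\ Forall2 (fun i k => i <= k <= i + p) (snd phi) (snd I).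

Definition IIset (F : bset) : cset := fun I => exists phi, F phi /\ II phi I.

Definition IIk (k : Z) (phi : bs) : cset := chc_z k (II phi).

Definition BBk (k : Z) (C : cset) : bset := fun phi =>
  allB phi /\ exists I, C I /\ IIk (- k) phi I.

Definition Oset (F : bset) (j : Z) (H : bset) : bset := fun psi =>
  BBk j (IIset F) psi /\ H psi.

Fixpoint Oiter (k : nat) (F : bset) (j : Z) (H : bset) : bset :=
  match k with
  | O => F
  | S O => Oset F j H
  | S k' => Oset (Oiter k' F j H) j H
  end.

Definition finite_set (L : bset) : Prop := exists l : list bs, forall x, L x -> In x l.

Definition subset (A B : bset) : Prop := forall x, A x -> B x.

Definition lineage (L : bset) : Prop :=
  finite_set L /\ subset L allB /\ subset L (fun x => B0 x \/ ch L x).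

Definition gen (L : bset) : bset := fun x => (B0 x \/ ch L x) /\ ~ L x.

(* gap(H) <= g, i.e. max over phi in H of sup{g' : O(phi,-g',H) <> empty} <= g *)
Definition gap_le (H : bset) (g : Z) : Prop :=
  forall phi, H phi -> forall g' : Z,
    (exists psi, Oset (eq phi) (- g') H psi) -> g' <= g.

End Defs.

(* Main.v *)
Require Import Defs.
From Stdlib Require Import ZArith List Lia Classical.
Import ListNotations.
Open Scope Z_scope.


Lemma II_iff m a I : II m a I <-> fst I = fst a /\
  Forall2 (fun i k => i <= k <= i + (Z.of_nat m - 1)) (snd a) (snd I).
Proof. reflexivity. Qed.

Lemma cc_iff n I J : cell_child n I J <-> fst J = S (fst I) /\
  Forall2 (fun i k => Z.of_nat n * i <= k <= Z.of_nat n * i + (Z.of_nat n - 1)) (snd I) (snd J).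
Proof. reflexivity. Qed.

Lemma bc_iff n m a c : bs_child n m a c <-> fst c = S (fst a) /\
  Forall2 (fun i k => Z.of_nat n * i <= k <= Z.of_nat n * i + (Z.of_nat n - 1) * Z.of_nat m) (snd a) (snd c).
Proof. reflexivity. Qed.

Lemma F2_uniq {A B} (R : A -> B -> Prop) :
  (forall a a' b, R a b -> R a' b -> a = a') ->
  forall l1 l, Forall2 R l1 l -> forall l2, Forall2 R l2 l -> l1 = l2.
Proof.
  intros HR l1 l H; induction H; intros l2 H2; inversion H2; subst; auto.
  f_equal; eauto.
Qed.

Lemma F2_comp {A B C X} (R : A -> B -> Prop) (S0 : B -> C -> Prop) (T : A -> X -> Prop) (U : X -> C -> Prop) :
  (forall a b c, R a b -> S0 b c -> exists x, T a x /\ U x c) ->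
  forall l1 l2, Forall2 R l1 l2 -> forall l3, Forall2 S0 l2 l3 ->
  exists lx, Forall2 T l1 lx /\ Forall2 U lx l3.
Proof.
  intros HH l1 l2 H; induction H as [|a0 b0 l1' l2' Hab _ IH]; intros l3 H3.
  - inversion H3; subst. exists []; auto.
  - inversion H3 as [|b1 c1 l2'' l3' Hbc Hr]; subst.
    destruct (HH _ _ _ Hab Hbc) as [x0 [Hx1 Hx2]].
    destruct (IH _ Hr) as [lx [H5 H6]].
    exists (x0 :: lx); auto.
Qed.

Lemma F2_map {A B} (R : A -> B -> Prop) (f : A -> B) :
  (forall a, R a (f a)) -> forall l, Forall2 R l (map f l).
Proof. intros H l; induction l; simpl; auto. Qed.

Lemma C1 (N M s c K : Z) : 2 <= N -> 2 <= M ->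
  N * s <= c <= N * s + (N - 1) * M -> c <= K <= c + (M - 1) ->
  exists q, s <= q <= s + (M - 1) /\ N * q <= K <= N * q + (N - 1).
Proof.
  intros HN HM H1 H2. exists (K / N).
  pose proof (Z.div_mod K N ltac:(lia)).
  pose proof (Z.mod_pos_bound K N ltac:(lia)).
  set (q := K / N) in *. set (r := K mod N) in *.
  split; [|lia]. split; nia.
Qed.

Lemma C2 (N M a I J : Z) : 2 <= N -> 2 <= M ->
  a <= I <= a + (M - 1) -> N * I <= J <= N * I + (N - 1) ->
  exists c, N * a <= c <= N * a + (N - 1) * M /\ c <= J <= c + (M - 1).
Proof.
  intros HN HM H1 H2.
  destruct (Z_le_gt_dec (J - N * a) ((N - 1) * M)).
  - exists J. nia.
  - exists (N * a + (N - 1) * M). nia.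
Qed.

Lemma C3 (N K K' I : Z) : 2 <= N ->
  N * K <= I <= N * K + (N - 1) -> N * K' <= I <= N * K' + (N - 1) -> K = K'.
Proof. intros. nia. Qed.


Definition ov (n m : nat) (a b : bs) (k : nat) : Prop :=
  exists I, II m a I /\ chc_n n k (II m b) I.

Lemma chc_n_S n k S0 x : chc_n n (S k) S0 x <-> exists I, chc_n n k S0 I /\ cell_child n I x.
Proof. reflexivity. Qed.

Lemma chc_n_mono n k (S1 S2 : cset) : (forall x, S1 x -> S2 x) ->
  forall x, chc_n n k S1 x -> chc_n n k S2 x.
Proof.
  intros H; induction k; simpl; intros x Hx; auto.
  destruct Hx as [I [HI Hc]]. exists I; auto.
Qed.

Lemma chc_n_chc n k S0 x : chc_n n k (chc n S0) x -> chc_n n (S k) S0 x.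
Proof.
  revert x; induction k; intros x Hx.
  - exact Hx.
  - destruct Hx as [I [HI Hc]]. exists I; split; auto.
Qed.

Lemma chc_n_lvl n k S0 x : chc_n n k S0 x -> exists y, S0 y /\ fst x = (fst y + k)%nat.
Proof.
  revert x; induction k; intros x Hx; simpl in *.
  - exists x; split; [exact Hx| lia].
  - destruct Hx as [I [HI Hc]]. destruct (IHk _ HI) as [y [Hy Hl]].
    exists y; split; auto. apply cc_iff in Hc. destruct Hc as [Hc _]. rewrite Hc, Hl. lia.
Qed.

Lemma ov_lvl n m a b k : ov n m a b k -> fst a = (fst b + k)%nat.
Proof.
  intros [I [H1 H2]]. destruct (chc_n_lvl _ _ _ _ H2) as [y [Hy Hl]].
  apply II_iff in H1; apply II_iff in Hy. destruct H1 as [H1 _]; destruct Hy as [Hy _]. lia.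
Qed.

Section G.
Variables (n m : nat).
Hypothesis hn : (2 <= n)%nat.
Hypothesis hm : (2 <= m)%nat.

Lemma L1 rho c K : bs_child n m rho c -> II m c K ->
  exists K', II m rho K' /\ cell_child n K' K.
Proof.
  intros Hc HK. apply bc_iff in Hc; apply II_iff in HK. destruct Hc as [Hc1 Hc2]; destruct HK as [HK1 HK2].
  assert (HC : forall a b c : Z,
    Z.of_nat n * a <= b <= Z.of_nat n * a + (Z.of_nat n - 1) * Z.of_nat m ->
    b <= c <= b + (Z.of_nat m - 1) ->
    exists x, a <= x <= a + (Z.of_nat m - 1) /\ Z.of_nat n * x <= c <= Z.of_nat n * x + (Z.of_nat n - 1)).
  { intros a0 b0 c0 Ha Hb. apply (C1 (Z.of_nat n) (Z.of_nat m) _ _ _ ltac:(lia) ltac:(lia) Ha Hb). }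
  destruct (F2_comp _ _ _ _ HC _ _ Hc2 _ HK2) as [lx [H1 H2]].
  exists (fst rho, lx). split.
  - apply II_iff; simpl; auto.
  - apply cc_iff; simpl; split; auto. lia.
Qed.

Lemma L4 a I J : II m a I -> cell_child n I J ->
  exists c, bs_child n m a c /\ II m c J.
Proof.
  intros HI HJ. apply II_iff in HI; apply cc_iff in HJ. destruct HI as [HI1 HI2]; destruct HJ as [HJ1 HJ2].
  assert (HC : forall a b c : Z,
    a <= b <= a + (Z.of_nat m - 1) -> Z.of_nat n * b <= c <= Z.of_nat n * b + (Z.of_nat n - 1) ->
    exists x, Z.of_nat n * a <= x <= Z.of_nat n * a + (Z.of_nat n - 1) * Z.of_nat m /\
      x <= c <= x + (Z.of_nat m - 1)).
  { intros a0 b0 c0 Ha Hb. apply (C2 (Z.of_nat n) (Z.of_nat m) _ _ _ ltac:(lia) ltac:(lia) Ha Hb). }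
  destruct (F2_comp _ _ _ _ HC _ _ HI2 _ HJ2) as [lx [H1 H2]].
  exists (S (fst a), lx). split.
  - apply bc_iff; simpl; auto.
  - apply II_iff; simpl; split; auto. lia.
Qed.

Lemma cell_parent_uniq K K' I : cell_child n K I -> cell_child n K' I -> K = K'.
Proof.
  intros H H'. apply cc_iff in H; apply cc_iff in H'.
  destruct H as [H1 H2]; destruct H' as [H1' H2'].
  destruct K as [k1 l1]; destruct K' as [k2 l2]; simpl in *.
  f_equal; [lia|].
  eapply F2_uniq; [|apply H2|apply H2'].
  intros a0 a1 b0 Ha Hb. apply (C3 (Z.of_nat n) _ _ _ ltac:(lia) Ha Hb).
Qed.

Lemma L2 rho c b j : bs_child n m rho c -> ov n m c b (S j) -> ov n m rho b j.
Proof.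
  intros Hc [I [HI Hch]]. apply chc_n_S in Hch. destruct Hch as [K [HK Hcc]].
  destruct (L1 _ _ _ Hc HI) as [K' [HK' Hcc']].
  rewrite (cell_parent_uniq _ _ _ Hcc Hcc') in HK.
  exists K'; auto.
Qed.

Lemma L3 sg c x j : bs_child n m sg c -> ov n m x c j -> ov n m x sg (S j).
Proof.
  intros Hc [I [HI Hch]]. exists I; split; auto.
  apply chc_n_chc. eapply chc_n_mono; [|apply Hch].
  intros K HK. destruct (L1 _ _ _ Hc HK) as [K' [H1 H2]]. exists K'; auto.
Qed.

Lemma child_cell I : cell_child n I (S (fst I), map (fun i => Z.of_nat n * i) (snd I)).
Proof.
  apply cc_iff; simpl; split; auto. apply F2_map. intros; lia.
Qed.

End G.


Definition zr (lo hi : Z) : list Z :=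
  map (fun k => lo + Z.of_nat k) (seq 0 (Z.to_nat (hi - lo + 1))).

Lemma zr_in lo hi x : lo <= x <= hi -> In x (zr lo hi).
Proof.
  intros H. unfold zr. apply in_map_iff. exists (Z.to_nat (x - lo)). split.
  - lia.
  - apply in_seq. lia.
Qed.

Fixpoint boxes (bx : list (Z * Z)) : list (list Z) :=
  match bx with
  | nil => [nil]
  | (lo, hi) :: r => flat_map (fun x => map (cons x) (boxes r)) (zr lo hi)
  end.

Lemma boxes_in bx l : Forall2 (fun b x => fst b <= x <= snd b) bx l -> In l (boxes bx).
Proof.
  intros H; induction H as [|[lo hi] x bx' l' Hx _ IH]; simpl.
  - auto.
  - apply in_flat_map. exists x. split.
    + apply zr_in; auto.
    + apply in_map; auto.
Qed.

Lemma F2_repeat (P : Z -> Prop) lo hi (l : list Z) d :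
  (forall x, P x -> lo <= x <= hi) -> Forall P l -> length l = d ->
  Forall2 (fun b x => fst b <= x <= snd b) (repeat (lo, hi) d) l.
Proof.
  intros HP H; revert d; induction H; intros d Hd; destruct d; simpl in *; try discriminate; auto.
Qed.

Lemma F2_mapbox (R : Z -> Z -> Prop) (f : Z -> Z * Z) la lx :
  (forall a x, R a x -> fst (f a) <= x <= snd (f a)) -> Forall2 R la lx ->
  Forall2 (fun b x => fst b <= x <= snd b) (map f la) lx.
Proof. intros Hf H; induction H; simpl; auto. Qed.

Lemma fin_union (A B C : bset) : finite_set A -> finite_set B ->
  (forall x, C x -> A x \/ B x) -> finite_set C.
Proof.
  intros [la Ha] [lb Hb] H. exists (la ++ lb). intros x Hx.
  apply in_or_app. destruct (H x Hx); auto.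
Qed.

Lemma B0_fin d m : finite_set (B0 d m).
Proof.
  exists (map (pair 0%nat) (boxes (repeat (-(Z.of_nat m - 1), 0) d))).
  intros [l0 x] [H1 [H2 H3]]. simpl in *. subst.
  apply in_map. apply boxes_in. eapply F2_repeat; eauto. simpl. auto.
Qed.

Lemma ch_fin n m L : finite_set L -> finite_set (ch n m L).
Proof.
  intros [lL HL].
  exists (flat_map (fun a => map (pair (S (fst a)))
     (boxes (map (fun i => (Z.of_nat n * i, Z.of_nat n * i + (Z.of_nat n - 1) * Z.of_nat m)) (snd a)))) lL).
  intros x [a [Ha Hc]]. apply in_flat_map. exists a. split; auto.
  apply bc_iff in Hc. destruct Hc as [Hc1 Hc2]. destruct x as [lx ix]; simpl in *. subst.
  apply in_map. apply boxes_in. eapply F2_mapbox; [|exact Hc2]. simpl. auto.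
Qed.

Lemma gen_allB d n m L x : subset L (allB d) -> gen d n m L x -> allB d x.
Proof.
  intros HL [[H|[a [Ha Hc]]] _].
  - destruct H as [_ [H _]]. exact H.
  - apply bc_iff in Hc. destruct Hc as [_ Hc]. unfold allB.
    rewrite <- (Forall2_length Hc). apply HL; auto.
Qed.

Lemma chc_z_nat n k S0 x : chc_z n (Z.of_nat k) S0 x <-> chc_n n k S0 x.
Proof.
  unfold chc_z. rewrite (proj2 (Z.leb_le 0 (Z.of_nat k))) by lia. rewrite Nat2Z.id. reflexivity.
Qed.

Lemma gap_to_ov d n m H g a b k : gap_le d n m H g -> H a -> H b -> allB d b ->
  ov n m a b k -> Z.of_nat k <= g.
Proof.
  intros Hg Ha Hb Hab [I [HI Hc]].
  apply (Hg a Ha (Z.of_nat k)). exists b. split; [|exact Hb].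
  split; [exact Hab|]. exists I. split.
  - exists a; auto.
  - unfold IIk. rewrite Z.opp_involutive. apply chc_z_nat. exact Hc.
Qed.

Lemma ov_to_gap d n m (H : bset) g : 0 < g ->
  (forall a b k, H a -> H b -> ov n m a b k -> Z.of_nat k <= g) -> gap_le d n m H g.
Proof.
  intros Hg0 HH a Ha g' [b [[Hab [I [[a' [Ea HI]] Hc]]] Hb]]. subst a'.
  destruct (Z_le_gt_dec g' 0) as [Hle|Hgt]; [lia|].
  unfold IIk in Hc. rewrite Z.opp_involutive in Hc.
  rewrite <- (Z2Nat.id g') in Hc by lia. apply chc_z_nat in Hc.
  pose proof (HH a b (Z.to_nat g') Ha Hb (ex_intro _ I (conj HI Hc))). lia.
Qed.

Lemma Oiter_S d n m k F j H : Oiter d n m (S k) F j H = Oset d n m (Oiter d n m k F j H) j H.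
Proof. destruct k; reflexivity. Qed.


Inductive chain (d n m : nat) (L : bset) (gn : nat) (phi : bs) : bs -> nat -> Prop :=
| chain0 : chain d n m L gn phi phi 0
| chainS : forall a b k, chain d n m L gn phi a k -> gen d n m L b -> ov n m a b gn ->
    chain d n m L gn phi b (S k).

Lemma chain_gen d n m L gn phi x k : gen d n m L phi -> chain d n m L gn phi x k -> gen d n m L x.
Proof. intros Hp H; induction H; auto. Qed.

Lemma chain_lvl d n m L gn phi x k : chain d n m L gn phi x k -> fst phi = (fst x + k * gn)%nat.
Proof.
  intros H; induction H; [lia|]. apply ov_lvl in H1. lia.
Qed.

Lemma descend d n m (hn : (2 <= n)%nat) (hm : (2 <= m)%nat) (Ls : bset) (B : nat) b :
  (forall x, Ls x -> (fst x <= B)%nat) ->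
  forall N a k, Ls a -> ov n m a b k -> (B < fst a + N)%nat ->
  exists e k', gen d n m Ls e /\ ov n m e b k' /\ (k < k')%nat.
Proof.
  intros HB N; induction N; intros a k Ha Hov HN.
  - specialize (HB a Ha). lia.
  - destruct Hov as [I [HI Hc]].
    pose proof (child_cell n m hn hm I) as HJ.
    destruct (L4 n m hn hm _ _ _ HI HJ) as [c [Hac HcJ]].
    assert (Hov' : ov n m c b (S k)).
    { eexists; split; [exact HcJ|]. apply chc_n_S. exists I; auto. }
    destruct (classic (Ls c)) as [Hc'|Hc'].
    + assert (Hl : fst c = S (fst a)) by (apply bc_iff in Hac; destruct Hac as [Hac _]; exact Hac).
      destruct (IHN c (S k) Hc' Hov' ltac:(lia)) as [e [k' [H1 [H2 H3]]]].
      exists e, k'; split; [exact H1|split; [exact H2|lia]].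
    + exists c, (S k). split; [|split; [exact Hov'|lia]].
      split; [|exact Hc']. right. exists a; auto.
Qed.

Lemma finite_bound (Ls : bset) : finite_set Ls -> exists B, forall x, Ls x -> (fst x <= B)%nat.
Proof.
  intros [l Hl]. exists (fold_right max 0%nat (map fst l)).
  intros x Hx. specialize (Hl x Hx). clear Hx.
  induction l; simpl in *; [contradiction|].
  destruct Hl as [E|E]; [subst; lia|]. specialize (IHl E). lia.
Qed.

Theorem main (d n m : nat) (hd : (1 <= d)%nat) (hn : (2 <= n)%nat) (hm : (2 <= m)%nat)
  (gn : nat) (hg : 0 < Z.of_nat gn) (L : bset) (hL : lineage d n m L)
  (hgap : gap_le d n m (gen d n m L) (Z.of_nat gn)) (phi : bs) (hphi : gen d n m L phi) :
  exists Lbar : bset,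
    lineage d n m Lbar /\ subset L Lbar /\ Lbar phi /\ gap_le d n m (gen d n m Lbar) (Z.of_nat gn) /\
    (forall Ls : bset, lineage d n m Ls -> subset L Ls -> Ls phi ->
       gap_le d n m (gen d n m Ls) (Z.of_nat gn) -> subset Lbar Ls) /\
    (forall psi : bs, Lbar psi -> ~ L psi -> psi <> phi ->
       exists k : nat, (1 <= k)%nat /\ Z.of_nat k <= Z.of_nat (lvl phi) / (Z.of_nat gn) /\
         Oiter d n m k (eq phi) (- (Z.of_nat gn)) (allB d) psi).
Proof.
  destruct hL as [hLfin [hLB hLcl]].
  set (C := fun x => exists k, chain d n m L gn phi x k).
  assert (HCg : forall x, C x -> gen d n m L x).
  { intros x [k Hk]. eapply chain_gen; eauto. }
  assert (HgB : forall x, gen d n m L x -> allB d x) by (intros; eapply gen_allB; eauto).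
  assert (hgap' : forall a b k, gen d n m L a -> gen d n m L b -> ov n m a b k -> (k <= gn)%nat).
  { intros a b k Ha Hb Hab. pose proof (gap_to_ov _ _ _ _ _ _ _ _ hgap Ha Hb (HgB _ Hb) Hab). lia. }
  exists (fun x => L x \/ C x).
  assert (Hclass : forall x, gen d n m (fun x => L x \/ C x) x ->
    gen d n m L x \/ (exists rho, C rho /\ bs_child n m rho x /\ ~ (L x \/ C x))).
  { intros x [[H|[a [[Ha|Ha] Hc]]] Hn].
    - left. split; [left; auto|]. intro; apply Hn; left; auto.
    - left. split; [right; exists a; auto|]. intro; apply Hn; left; auto.
    - right. exists a; auto. }
  split; [|split; [|split; [|split; [|split]]]].
  -
    split; [|split].
    + apply (fin_union L (fun x => B0 d m x \/ ch n m L x)); auto.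
      * apply (fin_union (B0 d m) (ch n m L)); auto using B0_fin, ch_fin.
      * intros x [H|H]; auto. right. apply HCg in H. destruct H; auto.
    + intros x [H|H]; [apply hLB; exact H|]. apply HgB. apply HCg; exact H.
    + intros x [H|H].
      * destruct (hLcl x H) as [H1|[a [Ha Hc]]]; auto. right. exists a; auto.
      * apply HCg in H. destruct H as [[H1|[a [Ha Hc]]] _]; auto. right. exists a; auto.
  - intros x H; auto.
  - right. exists 0%nat. constructor.
  -
    apply ov_to_gap; auto.
    intros a b k Ha Hb Hab.
    apply Nat2Z.inj_le.
    destruct (Hclass a Ha) as [Ga|[rho [Crho [Hrc Hna]]]];
    destruct (Hclass b Hb) as [Gb|[sg [Csg [Hsc Hnb]]]].
    + eauto.
    + pose proof (L3 n m hn hm _ _ _ _ Hsc Hab). pose proof (hgap' _ _ _ Ga (HCg _ Csg) H). lia.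
    + destruct k as [|k]; [lia|].
      pose proof (L2 n m hn hm _ _ _ _ Hrc Hab) as H.
      pose proof (hgap' _ _ _ (HCg _ Crho) Gb H).
      destruct (Nat.eq_dec k gn) as [E|E]; [|lia].
      exfalso. subst k.
      destruct Crho as [kr Hkr].
      destruct Hb as [_ Hnb']. apply Hnb'. right. exists (S kr). econstructor; eauto.
    + destruct k as [|k]; [lia|].
      pose proof (L2 n m hn hm _ _ _ _ Hrc Hab) as H.
      pose proof (L3 n m hn hm _ _ _ _ Hsc H) as H'.
      pose proof (hgap' _ _ _ (HCg _ Crho) (HCg _ Csg) H'). lia.
  -
    intros Ls [HsF [HsB HsC]] HLs Hphi Hsgap x [Hx|[k Hk]]; auto.
    destruct (finite_bound Ls HsF) as [B HB].
    induction Hk as [|a b k Hk IH Gb Hab]; auto.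
    destruct (classic (Ls b)) as [Hb|Hb]; auto. exfalso.
    destruct (descend d n m hn hm Ls B b HB (S B) a gn IH Hab ltac:(lia)) as [e [k' [He [Heb Hk']]]].
    assert (Gsb : gen d n m Ls b).
    { destruct Gb as [[H|[a' [Ha' Hc]]] _]; split; auto. right; exists a'; auto. }
    pose proof (gap_to_ov _ _ _ _ _ _ _ _ Hsgap He Gsb (HgB _ Gb) Heb). lia.
  -
    intros psi [H|[k Hk]] HnL Hne; [contradiction|].
    destruct k as [|k]; [inversion Hk; subst; contradiction|].
    exists (S k). split; [lia|]. split.
    + pose proof (chain_lvl _ _ _ _ _ _ _ _ Hk) as Hl. unfold lvl.
      apply Z.div_le_lower_bound; [lia|]. rewrite Hl. lia.
    + clear HnL Hne. revert Hk. generalize (S k) as k'. intros k' Hk.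
      induction Hk as [|a b k0 Hk IH Gb Hab].
      * reflexivity.
      * rewrite Oiter_S. split; [|exact (HgB _ Gb)].
        split; [exact (HgB _ Gb)|].
        destruct Hab as [I [HI Hc]]. exists I. split.
        -- exists a; auto.
        -- unfold IIk. rewrite Z.opp_involutive. apply chc_z_nat. exact Hc.
Qed.


Theorem lemma8p2 (d n m : nat) (hd : (1 <= d)%nat) (hn : (2 <= n)%nat) (hm : (2 <= m)%nat)
  (g : Z) (hg : 0 < g) (L : bset) (hL : lineage d n m L)
  (hgap : gap_le d n m (gen d n m L) g) (phi : bs) (hphi : gen d n m L phi) :
  exists Lbar : bset,
    lineage d n m Lbar /\ subset L Lbar /\ Lbar phi /\ gap_le d n m (gen d n m Lbar) g /\
    (forall Ls : bset, lineage d n m Ls -> subset L Ls -> Ls phi ->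
       gap_le d n m (gen d n m Ls) g -> subset Lbar Ls) /\
    (forall psi : bs, Lbar psi -> ~ L psi -> psi <> phi ->
       exists k : nat, (1 <= k)%nat /\ Z.of_nat k <= Z.of_nat (lvl phi) / g /\
         Oiter d n m k (eq phi) (- g) (allB d) psi).
Proof.
  pose proof (Z2Nat.id g (Z.lt_le_incl _ _ hg)) as Eg.
  rewrite <- Eg in *.
  apply main; auto.
Qed.
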